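(* Let $m,n\geq 2$ be integers. Then $c_{\mathrm{poly}}(mn)\geq c_{\mathrm{poly}}(n)+1$.
   Context: $S(\mathbb{Z}_n)$ is the set of bijections $\mathbb{Z}_n\to\mathbb{Z}_n$, and $S_{\mathrm{poly}}(\mathbb{Z}_n)$ is the set of $\pi\in S(\mathbb{Z}_n)$ for which there is a polynomial $f\in\mathbb{Z}_n[x]$ with $\pi(x)=f(x)$ for all $x\in\mathbb{Z}_n$. $\mathrm{cyc}(\pi)$ is the number of cycles (including fixed points) of $\pi$. Define $c_{\mathrm{poly}}(n)=\min_{\pi\in S_{\mathrm{poly}}(\mathbb{Z}_n)}\max_{k\in\mathbb{Z}_n}\mathrm{cyc}(x\mapsto\pi(x+k))$. *)

(* Defs.v *)
From HB Require Import structures.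
From mathcomp Require Import all_boot all_order all_algebra all_fingroup.
From mathcomp Require Import boolp.
Set Implicit Arguments. Unset Strict Implicit. Unset Printing Implicit Defensive.
Import GRing.Theory.
Local Open Scope ring_scope.

(* Z_n is 'Z_n (only meaningful for n >= 2; the theorem only uses n >= 2). *)

Definition is_poly_perm (n : nat) (s : {perm 'Z_n}) : Prop :=
  exists f : {poly 'Z_n}, forall x : 'Z_n, s x = f.[x].

Lemma addk_inj (n : nat) (k : 'Z_n) : injective (fun x : 'Z_n => x + k).
Proof. by move=> x y /addIr. Qed.
Definition transl (n : nat) (k : 'Z_n) : {perm 'Z_n} := perm (@addk_inj n k).

(* x |-> pi(x + k): first translate, then apply pi (MathComp: (s*t) x = t (s x)) *)
Definition shifted (n : nat) (s : {perm 'Z_n}) (k : 'Z_n) : {perm 'Z_n} :=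
  (transl k * s)%g.

(* number of cycles, including fixed points *)
Definition cyc (n : nat) (s : {perm 'Z_n}) : nat := #|porbits s|.

Definition maxcyc (n : nat) (s : {perm 'Z_n}) : nat :=
  \max_(k : 'Z_n) cyc (shifted s k).

(* c_poly(n) = min over polynomial permutations of maxcyc; the set is
   nonempty (identity), so the big-min default #|Z_n|.+1 is never attained. *)
Definition c_poly (n : nat) : nat :=
  \big[minn/#|'Z_n|.+1]_(s : {perm 'Z_n} | `[< is_poly_perm s >]) maxcyc s.

Lemma shifted_E (n : nat) (s : {perm 'Z_n}) (k x : 'Z_n) : shifted s k x = s (x + k).
Proof. by rewrite /shifted permM /transl permE. Qed.

(* Main.v *)
Require Import Defs.
From mathcomp Require Import all_boot all_order all_algebra all_fingroup.
From mathcomp Require Import boolp zify ring.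
Set Implicit Arguments. Unset Strict Implicit. Unset Printing Implicit Defensive.
Import GRing.Theory.
Local Open Scope ring_scope.

Lemma cyc_lift (T U : finType) (P : {perm T}) (Q : {perm U}) (i : U -> T) :
  injective i -> (forall u, P (i u) = i (Q u)) ->
  forall z, (forall u, i u != z) -> (#|porbits Q| < #|porbits P|)%N.
Proof.
move=> iinj hPQ z hz.
have pow : forall k u, (P ^+ k)%g (i u) = i ((Q ^+ k)%g u).
  elim=> [|k IH] u; first by rewrite !expg0 !perm1.
  by rewrite !expgSr !permM IH hPQ.
have himg : forall u, porbit P (i u) = i @: porbit Q u.
  move=> u; apply/setP => y; apply/idP/idP.
    by move=> /porbitP [k ->]; rewrite pow; apply: imset_f; apply: mem_porbit.
  by move=> /imsetP [w /porbitP [k ->] ->]; rewrite -pow mem_porbit.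
have hinj := imset_inj iinj.
rewrite -(card_imset (porbits Q) hinj).
have hz1 : porbit P z \in porbits P by apply: imset_f.
rewrite [#|porbits P|](cardsD1 (porbit P z)) hz1 add1n ltnS.
apply: subset_leq_card; apply/subsetP => O /imsetP [O' /imsetP [u _ ->] ->].
rewrite -himg in_setD1 imset_f // andbT.
apply/eqP => E.
have : z \in porbit P (i u) by rewrite E porbit_id.
rewrite himg => /imsetP [w _ E2].
by move: (hz w); rewrite E2 eqxx.
Qed.

Lemma Zlt (K : nat) (hK : (1 < K)%N) (x : 'Z_K) : (nat_of_ord x < K)%N.
Proof. have := ltn_ord x; rewrite -[val x]/(nat_of_ord x); move: (nat_of_ord x) => v; by rewrite Zp_cast. Qed.

Lemma ZvalE (K : nat) (x : 'Z_K) : x = ((nat_of_ord x)%:R : 'Z_K).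
Proof. by rewrite natr_Zp. Qed.

Definition emb (m n : nat) (u : 'Z_n) : 'Z_(m * n) := ((m * nat_of_ord u)%N)%:R.

Section Iota.
Variables (m n : nat) (hm : (2 <= m)%N) (hn : (2 <= n)%N).
Let hN : (1 < m * n)%N. Proof. nia. Qed.

Lemma emb_val (u : 'Z_n) : nat_of_ord (emb m u) = (m * nat_of_ord u)%N.
Proof.
rewrite /emb val_Zp_nat // modn_small //.
have := Zlt hn u; nia.
Qed.

Lemma emb_inj : injective (@emb m n).
Proof.
move=> u v E; apply: val_inj; have := congr1 (@nat_of_ord _) E; rewrite !emb_val.
move=> /eqP; rewrite eqn_pmul2l; [by move/eqP | nia].
Qed.

Lemma emb_nat (Y : nat) : emb m ((Y%:R : 'Z_n)) = (m%:R * Y%:R : 'Z_(m * n)).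
Proof.
rewrite /emb val_Zp_nat ?hn // muln_modr Zp_nat_mod // natrM //.
Qed.

Lemma emb_add (u v : 'Z_n) : emb m (u + v) = emb m u + emb m v.
Proof.
have -> : u + v = ((u + v)%N)%:R :> 'Z_n by rewrite natrD !natr_Zp.
rewrite -{2}(natr_Zp u) -{2}(natr_Zp v) !emb_nat natrD mulrDr //.
Qed.

Lemma emb_not1 (u : 'Z_n) : emb m u != 1.
Proof.
apply/negP => /eqP; rewrite -(mulr1n 1) => /(congr1 (@nat_of_ord _)); rewrite emb_val val_Zp_nat // modn_small //.
move=> /eqP; rewrite muln_eq1 => /andP [/eqP hm1 _]; move: hm; by rewrite hm1.
Qed.
End Iota.

Lemma bigmin_le_seq (T : eqType) (r : seq T) (P : pred T) (F : T -> nat) idx x :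
  x \in r -> P x -> (\big[minn/idx]_(i <- r | P i) F i <= F x)%N.
Proof.
elim: r => // a r IH; rewrite in_cons big_cons => /orP [/eqP <- ->|xr Px].
  exact: geq_minl.
case: (P a); last exact: IH.
by rewrite geq_min IH // orbT.
Qed.

Lemma bigmin_le (T : finType) (P : pred T) (F : T -> nat) idx x :
  P x -> (\big[minn/idx]_(i | P i) F i <= F x)%N.
Proof. by move=> Px; apply: bigmin_le_seq => //; rewrite mem_index_enum. Qed.

Section Key.
Variables (m n : nat) (hm : (2 <= m)%N) (hn : (2 <= n)%N).
Let hN : (1 < m * n)%N. Proof. nia. Qed.

Lemma key (s : {perm 'Z_(m * n)}) : is_poly_perm s -> (c_poly n + 1 <= maxcyc s)%N.
Proof.
case=> f hf.
pose k0 := ((s^-1)%g 0).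
have hk0 : s k0 = 0 by rewrite /k0 permKV.
pose c (i : 'I_(size f)) : 'Z_(m * n) := (f^`N(i.+1)).[k0] * (m%:R)^+i.
pose g : {poly 'Z_n} := \sum_(i < size f) ((nat_of_ord (c i))%:R : 'Z_n) *: 'X^(i.+1).
have taylor : forall X : 'Z_(m * n),
    f.[k0 + m%:R * X] = m%:R * \sum_(i < size f) c i * X ^+ (i.+1).
  move=> X; rewrite (@nderiv_taylor_wide _ (size f).+1 f k0 (m%:R * X) (mulrC _ _) (leqnSn (size f))).
  rewrite big_ord_recl nderivn0 -hf hk0 mul0r add0r big_distrr; apply: eq_bigr => i _ /=.
  rewrite /bump /= add1n /c exprMn exprS; ring.
have hg : forall u, emb m (g.[u]) = s (k0 + emb m u).
  move=> u; rewrite hf [emb m u]/emb natrM taylor.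
  have -> : g.[u] = ((\sum_(i < size f) (nat_of_ord (c i) * (nat_of_ord u) ^ (i.+1)))%N)%:R.
    rewrite horner_sum natr_sum; apply: eq_bigr => i _.
    by rewrite hornerZ hornerXn natrM natrX natr_Zp.
  rewrite emb_nat //; congr (_ * _); rewrite natr_sum; apply: eq_bigr => i _.
  by rewrite natrM natrX !natr_Zp.
have tinj : injective (fun u => g.[u]).
  move=> u v /(congr1 (@emb m n)); rewrite !hg => /perm_inj /addrI; exact: emb_inj.
pose tp := perm tinj.
have tpoly : is_poly_perm tp by exists g => x; rewrite permE.
have [v hv] := @eq_bigmax _ (fun k => cyc (shifted tp k)) (ltac:(by rewrite card_ord)).
have h1 : (c_poly n <= maxcyc tp)%N.
  rewrite /c_poly; apply: bigmin_le; exact/asboolP.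
have h2 : (cyc (shifted tp v) < cyc (shifted s (k0 + emb m v)%R))%N.
  apply: (@cyc_lift _ _ _ _ (@emb m n) (emb_inj hm hn) _ 1 (emb_not1 hm hn)).
  move=> u; rewrite !shifted_E permE hg emb_add //; congr (s _).
  by rewrite addrCA.
have h3 : (cyc (shifted s (k0 + emb m v)%R) <= maxcyc s)%N.
  rewrite /maxcyc; exact: leq_bigmax.
move: h1 h2 h3; rewrite /maxcyc hv; lia.
Qed.
End Key.

Theorem lemma5p2 (m n : nat) (hm : (2 <= m)%N) (hn : (2 <= n)%N) :
  (c_poly n + 1 <= c_poly (m * n))%N.
Proof.
have hle : (c_poly n <= #|'Z_n|.+1)%N.
  rewrite /c_poly; elim/big_rec: _ => // i x _ Hx; by rewrite geq_min Hx orbT.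
rewrite [c_poly (m * n)]/c_poly.
apply: (big_ind (fun x => c_poly n + 1 <= x)%N).
- move: hle; rewrite !card_ord !Zp_cast //; nia.
- by move=> x y Hx Hy; rewrite leq_min Hx Hy.
- by move=> s /asboolP; apply: key.
Qed.
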